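(* Let $0<t<1$ and $\alpha>0$. Define $H^{t}:\mathbb{R}\to\mathbb{R}$ by $H^{t}(p)=0$ if $p=0$, $H^{t}(p)=t$ if $0<|p|\le 1$, and $H^{t}(p)=1$ if $|p|>1$. Let $x\in\mathbb{R}$ with $|x|\ge 1$, and consider the function $E(p)=(x-p)^{2}+\alpha H^{t}(p)$ of $p\in\mathbb{R}$. Then $E$ attains its global minimum over $p\in\mathbb{R}$ at $$p=\begin{cases}0 & \text{if } |x|\le \min\!\left(\frac{1+\alpha t}{2},\sqrt{\alpha}\right),\\ \operatorname{sgn}(x) & \text{if } \frac{1+\alpha t}{2}<|x|\le 1+\sqrt{\alpha(1-t)},\\ x & \text{if } |x|>\max\!\left(1+\sqrt{\alpha(1-t)},\sqrt{\alpha}\right).\end{cases}$$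
   Context: $\operatorname{sgn}(x)$ denotes the sign of $x$ ($1$ if $x>0$, $-1$ if $x<0$). The function $H^{t}$ is the per-entry penalty of the ''$l_0^t$ measure'', which counts entries of absolute value greater than $1$ with weight $1$ and nonzero entries of absolute value at most $1$ with weight $t$. *)

(* Defs.v *)
From Stdlib Require Import Reals Lra.
Open Scope R_scope.

Definition Ht (t p : R) : R :=
  if Req_EM_T p 0 then 0 else if Rle_dec (Rabs p) 1 then t else 1.

(* Sign function: 1 if x > 0, -1 if x < 0 (value at 0 is irrelevant here,
   since it is only used for |x| >= 1; we set it to 0). *)
Definition sgn (x : R) : R :=
  if Rlt_dec 0 x then 1 else if Rlt_dec x 0 then -1 else 0.

Definition Eng (t alpha x p : R) : R := (x - p) ^ 2 + alpha * Ht t p.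

(* Main.v *)
Require Import Defs.
From Stdlib Require Import Reals Lra.
Open Scope R_scope.

Lemma sq_abs (y : R) : y ^ 2 = Rabs y ^ 2.
Proof. unfold Rabs; destruct (Rcase_abs y); nra. Qed.

Lemma lowbound (t alpha x p : R) (ht0 : 0 < t) (ht1 : t < 1) (halpha : 0 < alpha)
  (hx : 1 <= Rabs x) :
  (p = 0 /\ Eng t alpha x p = Rabs x ^ 2) \/
  (0 < Rabs p <= 1 /\ Eng t alpha x p >= (Rabs x - 1) ^ 2 + alpha * t) \/
  (1 < Rabs p /\ Eng t alpha x p >= alpha).
Proof.
  unfold Eng, Ht.
  destruct (Req_EM_T p 0) as [e|n].
  - left; subst; split; [reflexivity|]. rewrite (sq_abs (x - 0)); replace (x - 0) with x by ring; ring.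
  - destruct (Rle_dec (Rabs p) 1) as [l|l].
    + right; left. split; [split; [apply Rabs_pos_lt; exact n| exact l]|].
      rewrite (sq_abs (x - p)).
      assert (Rabs (x - p) >= Rabs x - Rabs p) by (pose proof (Rabs_triang_inv x p); lra).
      nra.
    + right; right. split; [lra|]. pose proof (pow2_ge_0 (x - p)); nra.
Qed.

Theorem theorem3p1 (t alpha x : R) (ht0 : 0 < t) (ht1 : t < 1)
  (halpha : 0 < alpha) (hx : 1 <= Rabs x) :
  (Rabs x <= Rmin ((1 + alpha * t) / 2) (sqrt alpha) ->
     forall p : R, Eng t alpha x 0 <= Eng t alpha x p) /\
  ((1 + alpha * t) / 2 < Rabs x <= 1 + sqrt (alpha * (1 - t)) ->
     forall p : R, Eng t alpha x (sgn x) <= Eng t alpha x p) /\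
  (Rmax (1 + sqrt (alpha * (1 - t))) (sqrt alpha) < Rabs x ->
     forall p : R, Eng t alpha x x <= Eng t alpha x p).
Proof.
  assert (hs1 := sqrt_sqrt alpha (Rlt_le _ _ halpha)).
  assert (hs2 := sqrt_pos alpha).
  assert (hb : 0 <= alpha * (1 - t)) by nra.
  assert (hs3 := sqrt_sqrt _ hb).
  assert (hs4 := sqrt_pos (alpha * (1 - t))).
  assert (E0 : Eng t alpha x 0 = Rabs x ^ 2).
  { unfold Eng, Ht. destruct (Req_EM_T 0 0); [|lra].
    rewrite (sq_abs (x - 0)); replace (x - 0) with x by ring; ring. }
  assert (Es : Eng t alpha x (sgn x) = (Rabs x - 1) ^ 2 + alpha * t).
  { unfold Eng, Ht, sgn, Rabs in *.
    destruct (Rcase_abs x); repeat match goal with |- context [if ?c then _ else _] => destruct c end; try lra; repeat match goal with H : context [if ?c then _ else _] |- _ => destruct c end; try lra; ring. }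
  split; [|split].
  - intros H p. rewrite E0.
    assert (Rabs x <= (1 + alpha * t) / 2) by (eapply Rle_trans; [exact H| apply Rmin_l]).
    assert (Rabs x <= sqrt alpha) by (eapply Rle_trans; [exact H| apply Rmin_r]).
    destruct (lowbound t alpha x p ht0 ht1 halpha hx) as [[_ h]|[[_ h]|[_ h]]]; nra.
  - intros [H1 H2] p. rewrite Es.
    destruct (lowbound t alpha x p ht0 ht1 halpha hx) as [[_ h]|[[_ h]|[_ h]]]; nra.
  - intros H p.
    assert (1 + sqrt (alpha * (1 - t)) < Rabs x) by (eapply Rle_lt_trans; [apply Rmax_l| exact H]).
    assert (sqrt alpha < Rabs x) by (eapply Rle_lt_trans; [apply Rmax_r| exact H]).
    assert (Ex : Eng t alpha x x = alpha).
    { unfold Eng, Ht. destruct (Req_EM_T x 0) as [e|_].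
      - rewrite e, Rabs_R0 in hx; lra.
      - destruct (Rle_dec (Rabs x) 1); [lra|]. ring. }
    rewrite Ex.
    destruct (lowbound t alpha x p ht0 ht1 halpha hx) as [[_ h]|[[_ h]|[_ h]]]; nra.
Qed.
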